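(* Let $n$ be a natural number and $T=(t_{ij})\in M_n(\mathbb{C})$. Then (i) $$\sup\{|\mathrm{tr}((R\circ C)T)|:R,C\in M_n(\mathbb{C}),\ \|R\|_r\le1,\ \|C\|_c\le1\}=\sup\Big\{\sum_{i=1}^n\Big(\sum_{j=1}^n|t_{ji}|^2b_{ij}\Big)^{1/2}: b_{ij}\ge0,\ \sum_{i=1}^nb_{ij}\le1 \text{ for all } j\Big\};$$ (ii) $$\sup\{|\mathrm{tr}((R\circ C)T)|:R,C\in M_n(\mathbb{C}),\ \|R\|_r\le1,\ \|C\|_c\le1\}\le n\max\{|t_{ij}|:1\le i,j\le n\}.$$
   Context: $R\circ C$ denotes the entrywise (Schur) product $(r_{ij}c_{ij})$. For a scalar matrix, $\|R\|_r:=\max_i(\sum_j|r_{ij}|^2)^{1/2}$ and $\|C\|_c:=\max_j(\sum_i|c_{ij}|^2)^{1/2}$. *)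

(* Defs.v *)
From mathcomp Require Import all_boot all_order all_algebra.
From mathcomp Require Import complex.
From mathcomp Require Import classical_sets reals.
Set Implicit Arguments. Unset Strict Implicit. Unset Printing Implicit Defensive.
Import Order.TTheory GRing.Theory Num.Theory.
Local Open Scope ring_scope.

Definition schur (K : pzRingType) (n : nat) (A B : 'M[K]_n) : 'M[K]_n :=
  \matrix_(i, j) (A i j * B i j).

Definition rownorm (R : rcfType) (n : nat) (A : 'M[R[i]]_n) : R :=
  \big[Num.max/0]_(i < n) Num.sqrt (\sum_(j < n) Normc.normc (A i j) ^+ 2).

Definition colnorm (R : rcfType) (n : nat) (A : 'M[R[i]]_n) : R :=
  \big[Num.max/0]_(j < n) Num.sqrt (\sum_(i < n) Normc.normc (A i j) ^+ 2).

Definition maxentry (R : rcfType) (n : nat) (A : 'M[R[i]]_n) : R :=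
  \big[Num.max/0]_(i < n) \big[Num.max/0]_(j < n) Normc.normc (A i j).

Definition schur_trace_set (R : realType) (n : nat) (T : 'M[R[i]]_n) : set R :=
  [set x | exists (A B : 'M[R[i]]_n),
     [/\ rownorm A <= 1, colnorm B <= 1 & x = Normc.normc (\tr (schur A B *m T))]].

Definition weight_set (R : realType) (n : nat) (T : 'M[R[i]]_n) : set R :=
  [set x | exists b : 'M[R]_n,
     [/\ (forall i j, 0 <= b i j), (forall j, \sum_(i < n) b i j <= 1) &
         x = \sum_(i < n) Num.sqrt (\sum_(j < n) Normc.normc (T j i) ^+ 2 * b i j)]].

(* Main.v *)
Require Import Defs.
From mathcomp Require Import all_boot all_order all_algebra.
From mathcomp Require Import complex.
From mathcomp Require Import classical_sets reals.
From mathcomp Require Import ring lra.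
Import Order.TTheory GRing.Theory Num.Theory.
Local Open Scope ring_scope.
Set Implicit Arguments. Unset Strict Implicit.

Lemma sum0_sq (R : realType) n (x : 'I_n -> R) :
  \sum_(j < n) x j ^+ 2 = 0 -> forall j, x j = 0.
Proof.
move=> h j; apply/eqP; rewrite -sqrf_eq0; apply/eqP.
by apply: (psumr_eq0P (fun j _ => sqr_ge0 (x j)) h).
Qed.

Lemma CS (R : realType) n (x y : 'I_n -> R) :
  \sum_(j < n) x j * y j <=
  Num.sqrt (\sum_(j < n) x j ^+ 2) * Num.sqrt (\sum_(j < n) y j ^+ 2).
Proof.
have hx : Num.sqrt (\sum_(j < n) x j ^+ 2) ^+ 2 = \sum_(j < n) x j ^+ 2.
  by rewrite sqr_sqrtr // sumr_ge0 // => j _; exact: sqr_ge0.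
have hy : Num.sqrt (\sum_(j < n) y j ^+ 2) ^+ 2 = \sum_(j < n) y j ^+ 2.
  by rewrite sqr_sqrtr // sumr_ge0 // => j _; exact: sqr_ge0.
have X0 := sqrtr_ge0 (\sum_(j < n) x j ^+ 2).
have Y0 := sqrtr_ge0 (\sum_(j < n) y j ^+ 2).
move: hx hy X0 Y0.
move: (Num.sqrt (\sum_(j < n) x j ^+ 2)) (Num.sqrt (\sum_(j < n) y j ^+ 2)) => X Y hx hy X0 Y0.
have key : 0 <= \sum_(j < n) (x j * Y - y j * X) ^+ 2 by apply: sumr_ge0 => j _; exact: sqr_ge0.
have e : \sum_(j < n) (x j * Y - y j * X) ^+ 2 =
   Y ^+ 2 * \sum_(j < n) x j ^+ 2 - 2 * X * Y * \sum_(j < n) x j * y j + X ^+ 2 * \sum_(j < n) y j ^+ 2.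
  rewrite !mulr_sumr -sumrB -big_split /=; apply: eq_bigr => j _; ring.
rewrite e hx hy in key.
have [X00|Xp] := eqVneq X 0.
  have : \sum_(j < n) x j ^+ 2 = 0 by rewrite -hx X00 expr0n.
  move/sum0_sq => z; rewrite big1 ?X00 ?mul0r // => j _; by rewrite z mul0r.
have [Y00|Yp] := eqVneq Y 0.
  have : \sum_(j < n) y j ^+ 2 = 0 by rewrite -hy Y00 expr0n.
  move/sum0_sq => z; rewrite big1 ?Y00 ?mulr0 // => j _; by rewrite z mulr0.
have XY : 0 < X * Y by rewrite mulr_gt0 // lt_def ?Xp ?Yp.
move: key; set S := \sum_(j < n) x j * y j => key.
have : X * Y * S <= X * Y * (X * Y) by nra.
by rewrite ler_pM2l.
Qed.

Section S.
Local Open Scope complex_scope.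
Local Open Scope ring_scope.
Variable R : realType.
Variable n : nat.
Variable T : 'M[R[i]]_n.
Local Notation nc := (@Normc.normc R).

Lemma nc_ge0 (z : R[i]) : 0 <= nc z.
Proof. by case: z => a b; rewrite /= sqrtr_ge0. Qed.

Lemma M_ge0 : 0 <= maxentry T.
Proof. exact: bigmax_ge_id. Qed.

Lemma le_M i j : nc (T i j) <= maxentry T.
Proof.
apply: le_trans (le_bigmax _ _ i).
exact: (le_bigmax _ (fun j => nc (T i j)) j).
Qed.

Lemma sqrt_amgm (a : R) : 0 <= a -> Num.sqrt a <= (1 + a) / 2.
Proof.
move=> a0; move: (sqrtr_ge0 a) (sqr_sqrtr a0); move: (Num.sqrt a) => s hs h.
rewrite -h; have := sqr_ge0 (s - 1); rewrite !expr2 => hh; nra.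
Qed.

Lemma weight_le (b : 'M[R]_n) : (forall i j, 0 <= b i j) ->
  (forall j, \sum_(i < n) b i j <= 1) ->
  \sum_(i < n) Num.sqrt (\sum_(j < n) nc (T j i) ^+ 2 * b i j) <= n%:R * maxentry T.
Proof.
move=> b0 b1; set M := maxentry T; have M0 : 0 <= M := M_ge0.
have step i : Num.sqrt (\sum_(j < n) nc (T j i) ^+ 2 * b i j)
   <= M / 2 * (1 + \sum_(j < n) b i j).
  have a0 : 0 <= \sum_(j < n) b i j by apply: sumr_ge0.
  apply: (@le_trans _ _ (Num.sqrt (M ^+ 2 * \sum_(j < n) b i j))).
    apply: ler_wsqrtr; rewrite mulr_sumr; apply: ler_sum => j _.
    apply: ler_wpM2r => //; rewrite !expr2; apply: ler_pM => //; [exact: nc_ge0|exact: nc_ge0|exact: le_M|exact: le_M].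
  rewrite sqrtrM ?sqr_ge0 // sqrtr_sqr ger0_norm //.
  have := sqrt_amgm a0; nra.
apply: le_trans (ler_sum _ (fun i _ => step i)) _.
rewrite -mulr_sumr big_split /= sumr_const card_ord.
have : \sum_(i < n) \sum_(j < n) b i j <= n%:R.
  rewrite exchange_big /=; apply: le_trans (ler_sum _ (fun j _ => b1 j)) _.
  by rewrite sumr_const card_ord.
rewrite -[1 *+ n]/(n%:R); nra.
Qed.

Lemma nc_real (x : R) : nc x%:C = `|x|.
Proof. by rewrite /Normc.normc /= expr0n /= addr0 sqrtr_sqr. Qed.

Lemma nc_conj (z : R[i]) : nc (z^*)%C = nc z.
Proof. by case: z => a b; rewrite /= sqrrN. Qed.

Lemma mul_conj (z : R[i]) : (z^*)%C * z = ((nc z)^+2)%:C.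
Proof.
case: z => a b; rewrite /= sqr_sqrtr ?addr_ge0 ?sqr_ge0 //.
apply/eqP; rewrite eq_complex /=; apply/andP; split; apply/eqP; ring.
Qed.

Lemma nc_sum m (F : 'I_m -> R[i]) : nc (\sum_(i < m) F i) <= \sum_(i < m) nc (F i).
Proof.
elim/big_rec2: _ => [|i u v _ h]; first by rewrite Normc.normc0.
apply: (@le_trans _ _ (nc (F i) + nc v)); last by rewrite lerD2l.
rewrite -lecR rmorphD /=.
have e z : (nc z)%:C = `|z| by case: z.
rewrite !e; exact: (@ler_normD _ R[i]).
Qed.

Lemma trE (A B : 'M[R[i]]_n) :
  \tr (schur A B *m T) = \sum_(i < n) \sum_(j < n) A i j * B i j * T j i.
Proof.
rewrite /mxtrace; apply: eq_bigr => i _; rewrite mxE; apply: eq_bigr => j _.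
by rewrite mxE.
Qed.

Lemma W_sub_S : (weight_set T `<=` schur_trace_set T)%classic.
Proof.
move=> x [b [b0 b1 ->]].
set s := fun i => Num.sqrt (\sum_(j < n) nc (T j i) ^+ 2 * b i j).
have s0 i : 0 <= s i by exact: sqrtr_ge0.
have ss i : s i ^+ 2 = \sum_(j < n) nc (T j i) ^+ 2 * b i j.
  rewrite sqr_sqrtr // sumr_ge0 // => j _; apply: mulr_ge0 => //; exact: sqr_ge0.
have sb i j : Num.sqrt (b i j) ^+ 2 = b i j by rewrite sqr_sqrtr.
exists (\matrix_(i, j) (conjc (T j i) * real_complex R (Num.sqrt (b i j) / s i))).
exists (\matrix_(i, j) real_complex R (Num.sqrt (b i j))).
split.
- rewrite /rownorm; apply: bigmax_le => [|i _]; first exact: ler01.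
  rewrite -sqrtr1; apply: ler_wsqrtr.
  have -> : \sum_(j < n) nc ((\matrix_(i, j) (conjc (T j i) * real_complex R (Num.sqrt (b i j) / s i))) i j) ^+ 2
      = s i ^+ 2 / s i ^+ 2.
    rewrite {1}ss mulr_suml; apply: eq_bigr => j _.
    rewrite mxE Normc.normcM nc_conj nc_real ger0_norm ?divr_ge0 ?sqrtr_ge0 //.
    by rewrite exprMn expr_div_n sb mulrA.
  have [->|h] := eqVneq (s i) 0; first by rewrite expr0n /= mul0r ler01.
  by rewrite divff // expf_neq0.
- rewrite /colnorm; apply: bigmax_le => [|j _]; first exact: ler01.
  rewrite -sqrtr1; apply: ler_wsqrtr.
  rewrite (eq_bigr (fun i => b i j)); first exact: b1.
  by move=> i _; rewrite mxE nc_real ger0_norm ?sqrtr_ge0 // sb.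
rewrite trE.
have e c (u v : R) : conjc c * u%:C * v%:C * c = (conjc c * c) * (u * v)%:C.
  rewrite rmorphM /=; ring.
rewrite (eq_bigr (fun i => (s i)%:C)).
  by rewrite -rmorph_sum nc_real ger0_norm // sumr_ge0.
move=> i _.
rewrite (eq_bigr (fun j => (nc (T j i) ^+ 2 * b i j / s i)%:C)); last first.
  move=> j _; rewrite !mxE e mul_conj -rmorphM /=; congr (_%:C).
  by rewrite [_ / s i * _]mulrAC -expr2 sb mulrA.
rewrite -rmorph_sum /= -mulr_suml -ss; congr (_%:C).
have [->|h] := eqVneq (s i) 0; first by rewrite expr0n /= mul0r.
by rewrite expr2 mulfK.
Qed.

Lemma S_le_W x : schur_trace_set T x -> exists2 w, weight_set T w & x <= w.
Proof.
move=> [A [B [rA cB ->]]].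
have sq1 (y : R) : 0 <= y -> Num.sqrt y <= 1 -> y <= 1.
  move=> y0 h; rewrite -(sqr_sqrtr y0); apply: exprn_ile1 => //; exact: sqrtr_ge0.
have rowi i : Num.sqrt (\sum_(j < n) nc (A i j) ^+ 2) <= 1.
  apply: le_trans rA; exact: (le_bigmax _ (fun i => Num.sqrt (\sum_(j < n) nc (A i j) ^+ 2)) i).
have colj j : \sum_(i < n) nc (B i j) ^+ 2 <= 1.
  apply: sq1; first by apply: sumr_ge0 => i _; exact: sqr_ge0.
  apply: le_trans cB; exact: (le_bigmax _ (fun j => Num.sqrt (\sum_(i < n) nc (B i j) ^+ 2)) j).
exists (\sum_(i < n) Num.sqrt (\sum_(j < n) nc (T j i) ^+ 2 * nc (B i j) ^+ 2)).
  exists (\matrix_(i, j) nc (B i j) ^+ 2); split.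
  - by move=> i j; rewrite mxE sqr_ge0.
  - by move=> j; rewrite (eq_bigr (fun i => nc (B i j) ^+ 2)) // => i _; rewrite mxE.
  - by apply: eq_bigr => i _; congr Num.sqrt; apply: eq_bigr => j _; rewrite mxE.
rewrite trE; apply: le_trans (nc_sum _) _; apply: ler_sum => i _.
apply: le_trans (nc_sum _) _.
apply: (@le_trans _ _ (\sum_(j < n) nc (A i j) * (nc (B i j) * nc (T j i)))).
  by apply: ler_sum => j _; rewrite !Normc.normcM mulrA.
apply: le_trans (CS _ _) _.
rewrite -[X in _ <= X]mul1r; apply: ler_pM => //; first exact: sqrtr_ge0.
  exact: sqrtr_ge0.
by apply: ler_wsqrtr; rewrite le_eqVlt; apply/orP; left; apply/eqP; apply: eq_bigr => j _; rewrite exprMn mulrC.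
Qed.
End S.

Unset Implicit Arguments.
Theorem mainTheorem4 (R : realType) (n : nat) (T : 'M[R[i]]_n) :
  sup (schur_trace_set T) = sup (weight_set T) /\
  sup (schur_trace_set T) <= n%:R * maxentry T.
Proof.
have Wne : (weight_set T !=set0)%classic.
  exists (\sum_(i < n) Num.sqrt (\sum_(j < n) Normc.normc (T j i) ^+ 2 * (0 : 'M[R]_n) i j)).
  exists 0; split => //; first by move=> i j; rewrite mxE.
  by move=> j; rewrite big1 // => i _; rewrite mxE.
have Sne : (schur_trace_set T !=set0)%classic.
  by case: Wne => w /W_sub_S Sw; exists w.
have ubW : ubound (weight_set T) (n%:R * maxentry T).
  by move=> w [b [b0 b1 ->]]; exact: weight_le.
have ubS : ubound (schur_trace_set T) (n%:R * maxentry T).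
  by move=> x /S_le_W [w Ww xw]; exact: le_trans xw (ubW _ Ww).
have hW : has_sup (weight_set T) by split => //; exists (n%:R * maxentry T).
have hS : has_sup (schur_trace_set T) by split => //; exists (n%:R * maxentry T).
split; last exact: ge_sup.
apply: le_anti; apply/andP; split.
  apply: ge_sup => // x /S_le_W [w Ww xw].
  apply: (le_trans xw); exact: (sup_upper_bound hW).

apply: ge_sup => // x Wx.
by apply: (sup_upper_bound hS); apply: W_sub_S.
Qed.
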